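(* Let $\mathfrak{g}_1,\mathfrak{g}_2$ be $S$-algebras and let $D$ be a derivation of $\mathfrak{g}_1\underline{\times}\mathfrak{g}_2$, with $D_{ij}=p_iDp_j$. If $D_{11}$ and $D_{22}$ are nilpotent derivations (of $\mathfrak{g}_1$, resp. $\mathfrak{g}_2$), then $D_{33}$ is a nilpotent endomorphism (of $\mathfrak{g}_3$).
   Context: All Lie algebras are finite-dimensional, complex, nilpotent and nonabelian. $C^1\mathfrak{g}=[\mathfrak{g},\mathfrak{g}]$. Product by generators: for $\mathfrak{g}_1,\mathfrak{g}_2$ of dimensions $m_1,m_2$ take bases $\{X_1,\dots,X_{m_1}\}$, $\{X'_1,\dots,X'_{m_2}\}$ such that $X_1,\dots,X_{n_1}$ generate $\mathfrak{g}_1$ and $X_{n_1+1},\dots,X_{m_1}$ span $C^1\mathfrak{g}_1$, and similarly for $\mathfrak{g}_2$ with $n_2$ generators. $\mathfrak{g}_1\underline{\times}\mathfrak{g}_2$ is the Lie algebra on $\mathfrak{g}_1\oplus\mathfrak{g}_2\oplus\mathfrak{g}_3$, $\mathfrak{g}_3=\langle Z_1,\dots,Z_{n_1n_2}\rangle$, with the brackets of $\mathfrak{g}_1$ and of $\mathfrak{g}_2$, $[X_i,X'_j]=Z_{(i-1)n_2+j}$ for $i\le n_1$, $j\le n_2$, $[X_i,X'_j]=0$ otherwise, and $\mathfrak{g}_3$ central. $p_i$ is the projection onto $\mathfrak{g}_i$. A nilpotent Lie algebra $\mathfrak{g}_1$ is an $S$-algebra if for every Lie algebra $\mathfrak{g}_2$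 and every derivation $D$ of $\mathfrak{g}_1\underline{\times}\mathfrak{g}_2$ one has $D_{21}(\mathfrak{g}_1)\subset C^1\mathfrak{g}_2$ (and symmetrically with the roles of the factors exchanged). *)

(* Defs.v *)
From HB Require Import structures.
From mathcomp Require Import all_boot all_order all_algebra.
From mathcomp Require Import Rstruct complex.
Set Implicit Arguments. Unset Strict Implicit. Unset Printing Implicit Defensive.
Import Order.TTheory GRing.Theory Num.Theory.
Local Open Scope ring_scope.

Definition C : Type := (Rdefinitions.R)[i].
HB.instance Definition _ := GRing.Field.on C.

(* A Lie bracket on the coordinate space C^m = 'rV[C]_m (fixed basis = unit
   vectors delta_mx 0 i). *)
Definition is_lie_bracket (m : nat) (b : 'rV[C]_m -> 'rV[C]_m -> 'rV[C]_m) :=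
  [/\ (forall (a : C) x y z, b (a *: x + y) z = a *: b x z + b y z),
      (forall (a : C) x y z, b x (a *: y + z) = a *: b x y + b x z),
      (forall x, b x x = 0) &
      (forall x y z, b x (b y z) + b y (b z x) + b z (b x y) = 0)].

(* nilpotent: some k with ad_{x_1} ... ad_{x_k} y = 0 for all x_i, y,
   i.e. C^k g = 0 *)
Definition lie_nilpotent (m : nat) (b : 'rV[C]_m -> 'rV[C]_m -> 'rV[C]_m) :=
  exists k : nat, forall (xs : seq 'rV[C]_m) (y : 'rV[C]_m),
    size xs = k -> foldr b y xs = 0.

Definition lie_nonabelian (m : nat) (b : 'rV[C]_m -> 'rV[C]_m -> 'rV[C]_m) :=
  exists x y, b x y != 0.

(* C^1 g = [g,g], as a row space: span of the brackets of basis vectors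
   (equal to the span of all brackets by bilinearity) *)
Definition derived_mx (m : nat) (b : 'rV[C]_m -> 'rV[C]_m -> 'rV[C]_m) : 'M[C]_m :=
  (\sum_(i < m) \sum_(j < m) <<b (delta_mx 0 i) (delta_mx 0 j)>>)%MS.

Definition generated_by_first (n k : nat)
    (b : 'rV[C]_(n + k) -> 'rV[C]_(n + k) -> 'rV[C]_(n + k)) :=
  forall S : 'M[C]_(n + k),
    (forall i : 'I_(n + k), (i < n)%N -> ((delta_mx 0 i : 'rV[C]_(n + k)) <= S)%MS) ->
    (forall u v, (u <= S)%MS -> (v <= S)%MS -> (b u v <= S)%MS) ->
    ((1%:M : 'M[C]_(n + k)) <= S)%MS.

(* X_{n+1},...,X_{n+k} span C^1 g *)
Definition last_span_derived (n k : nat)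
    (b : 'rV[C]_(n + k) -> 'rV[C]_(n + k) -> 'rV[C]_(n + k)) :=
  (derived_mx b == row_mx (0 : 'M[C]_(k, n)) (1%:M : 'M[C]_k))%MS.

(* A finite-dimensional complex nilpotent nonabelian Lie algebra of dimension
   ngen + nder, given in a basis whose first ngen vectors generate it and whose
   last nder vectors span (hence form a basis of) C^1. *)
Record nlie := NLie {
  ngen : nat;
  nder : nat;
  lbr : 'rV[C]_(ngen + nder) -> 'rV[C]_(ngen + nder) -> 'rV[C]_(ngen + nder);
  lbr_lie : is_lie_bracket lbr;
  lbr_nil : lie_nilpotent lbr;
  lbr_nonab : lie_nonabelian lbr;
  lbr_gen : generated_by_first lbr;
  lbr_der : last_span_derived lbr
}.

Definition ldim (g : nlie) := (ngen g + nder g)%N.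

(* the space of g1 x_ g2 = g1 (+) g2 (+) g3, dim g3 = n1 n2 *)
Definition pdim (g1 g2 : nlie) := (ldim g1 + ldim g2 + ngen g1 * ngen g2)%N.

Section Product.
Variables g1 g2 : nlie.

Definition p1 (w : 'rV[C]_(pdim g1 g2)) : 'rV[C]_(ldim g1) := lsubmx (lsubmx w).
Definition p2 (w : 'rV[C]_(pdim g1 g2)) : 'rV[C]_(ldim g2) := rsubmx (lsubmx w).
Definition p3 (w : 'rV[C]_(pdim g1 g2)) : 'rV[C]_(ngen g1 * ngen g2) := rsubmx w.

Definition i1 (v : 'rV[C]_(ldim g1)) : 'rV[C]_(pdim g1 g2) := row_mx (row_mx v 0) 0.
Definition i2 (v : 'rV[C]_(ldim g2)) : 'rV[C]_(pdim g1 g2) := row_mx (row_mx 0 v) 0.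
Definition i3 (v : 'rV[C]_(ngen g1 * ngen g2)) : 'rV[C]_(pdim g1 g2) := row_mx 0 v.

(* [X_i, X'_j] = Z_{(i-1) n2 + j} (i <= n1, j <= n2); g3 central;
   the g3-component of [x,y] is the mxvec (row-major) of the n1 x n2 matrix
   x1_i y2_j - y1_i x2_j built from generator coordinates. *)
Definition prod_br (x y : 'rV[C]_(pdim g1 g2)) : 'rV[C]_(pdim g1 g2) :=
  row_mx (row_mx (lbr (p1 x) (p1 y)) (lbr (p2 x) (p2 y)))
    (mxvec (\matrix_(i < ngen g1, j < ngen g2)
       (lsubmx (p1 x) 0 i * lsubmx (p2 y) 0 j - lsubmx (p1 y) 0 i * lsubmx (p2 x) 0 j))).

(* derivations of g1 x_ g2, as matrices acting on row vectors on the right *)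
Definition is_prod_derivation (D : 'M[C]_(pdim g1 g2)) :=
  forall x y, prod_br x y *m D = prod_br (x *m D) y + prod_br x (y *m D).

Definition D11 (D : 'M[C]_(pdim g1 g2)) v := p1 (i1 v *m D).
Definition D22 (D : 'M[C]_(pdim g1 g2)) v := p2 (i2 v *m D).
Definition D33 (D : 'M[C]_(pdim g1 g2)) v := p3 (i3 v *m D).
Definition D21 (D : 'M[C]_(pdim g1 g2)) v := p2 (i1 v *m D).
Definition D12 (D : 'M[C]_(pdim g1 g2)) v := p1 (i2 v *m D).
End Product.

Definition nilpotent_endo (T : zmodType) (f : T -> T) :=
  exists k : nat, forall v, iter k f v = 0.

Definition S_algebra (g1 : nlie) :=
  (forall (g2 : nlie) (D : 'M[C]_(pdim g1 g2)), is_prod_derivation D ->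
     forall v, (D21 D v <= derived_mx (@lbr g2))%MS) /\
  (forall (g2 : nlie) (D : 'M[C]_(pdim g2 g1)), is_prod_derivation D ->
     forall v, (D12 D v <= derived_mx (@lbr g2))%MS).

(* Main.v *)
Require Import Defs.
From mathcomp Require Import all_boot all_algebra.
Set Implicit Arguments. Unset Strict Implicit. Unset Printing Implicit Defensive.
Import GRing.Theory.
Local Open Scope ring_scope.

Lemma mx_ext_rows (m n : nat) (A B : 'M[C]_(m, n)) :
  (forall u : 'rV_m, u *m A = u *m B) -> A = B.
Proof. by move=> H; apply/row_matrixP => i; rewrite !rowE H. Qed.

Lemma trmxX (n : nat) (A : 'M[C]_n) k : (A ^+ k)^T = (A^T) ^+ k.
Proof.
elim: k => [|k IH]; first by rewrite !expr0 trmx1.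
by rewrite exprSr exprS -IH -!mulmxE trmx_mul.
Qed.

Section Br.
Variable m : nat.
Variable b : 'rV[C]_m -> 'rV[C]_m -> 'rV[C]_m.
Hypothesis hb : is_lie_bracket b.

Lemma br0l z : b 0 z = 0.
Proof.
case: hb => L _ _ _. have := L (-1) 0 0 z.
by rewrite !scaleN1r oppr0 addr0 addNr.
Qed.
Lemma br0r z : b z 0 = 0.
Proof.
case: hb => _ L _ _. have := L (-1) z 0 0.
by rewrite !scaleN1r oppr0 addr0 addNr.
Qed.
Lemma brDl x y z : b (x + y) z = b x z + b y z.
Proof. case: hb => L _ _ _. by rewrite -(scale1r x) L !scale1r. Qed.
Lemma brZl a x z : b (a *: x) z = a *: b x z.
Proof. case: hb => L _ _ _. by rewrite -(addr0 (a *: x)) L br0l addr0. Qed.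
Lemma brDr x y z : b z (x + y) = b z x + b z y.
Proof. case: hb => _ L _ _. by rewrite -(scale1r x) L !scale1r. Qed.
Lemma brZr a x z : b z (a *: x) = a *: b z x.
Proof. case: hb => _ L _ _. by rewrite -(addr0 (a *: x)) L br0r addr0. Qed.

Lemma br_sub_derived u w : (b u w <= derived_mx b)%MS.
Proof.
rewrite (row_sum_delta u).
elim/big_ind: _ => [| x y Hx Hy | a _].
- by rewrite br0l sub0mx.
- by rewrite brDl addmx_sub.
rewrite brZl scalemx_sub //.
rewrite (row_sum_delta w).
elim/big_ind: _ => [| x y Hx Hy | c _].
- by rewrite br0r sub0mx.
- by rewrite brDr addmx_sub.
rewrite brZr scalemx_sub //.
rewrite /derived_mx.
apply: (sumsmx_sup a) => //. apply: (sumsmx_sup c) => //.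
by rewrite genmxE.
Qed.
End Br.
Section Block.
Variable g : nlie.
Local Notation n := (ngen g).
Local Notation k := (nder g).
Local Notation b := (@lbr g).

Definition Pl : 'M[C]_(n + k, n) := col_mx 1%:M 0.

Lemma mulPl (v : 'rV[C]_(n + k)) : v *m Pl = lsubmx v.
Proof. by rewrite -{1}(hsubmxK v) /Pl mul_row_col mulmx1 mulmx0 addr0. Qed.

Lemma der_lsub0 (v : 'rV[C]_(n + k)) : (v <= derived_mx b)%MS -> lsubmx v = 0.
Proof.
rewrite (eqmxP (lbr_der g)) => /submxP [D ->].
by rewrite mul_mx_row row_mxKl mulmx0.
Qed.

Lemma block_nil (M : 'M[C]_(n + k)) :
  (forall u w, b u w *m M = b (u *m M) w + b u (w *m M)) ->
  (exists N, M ^+ N = 0) -> exists N, (ulsubmx M) ^+ N = 0.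
Proof.
move=> Hder [N HN].
have Hker : (derived_mx b <= kermx (M *m Pl))%MS.
  apply/sumsmx_subP => a _; apply/sumsmx_subP => c _.
  rewrite genmxE sub_kermx mulmxA Hder mulmxDl !mulPl.
  by rewrite !der_lsub0 ?addr0 //; apply: br_sub_derived; apply: lbr_lie.
have Hdl : dlsubmx M = 0.
  apply: mx_ext_rows => w; rewrite mulmx0.
  have Hw : (row_mx 0 w <= derived_mx b)%MS.
    rewrite (eqmxP (lbr_der g)).
    have -> : row_mx (0 : 'rV[C]_n) w = w *m row_mx 0 1%:M
      by rewrite mul_mx_row mulmx0 mulmx1.
    exact: submxMl.
  have := submx_trans Hw Hker; rewrite sub_kermx mulmxA => /eqP.
  by rewrite -{1}(vsubmxK M) mul_row_col mul0mx add0r mulPl mulmx_lsub.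
have Hp : forall j, ulsubmx (M ^+ j) = (ulsubmx M) ^+ j /\ dlsubmx (M ^+ j) = 0.
  elim=> [|j [IH1 IH2]].
    by rewrite !expr0 -!idmxE scalar_mx_block block_mxKul block_mxKdl.
  rewrite exprSr -mulmxE.
  have -> : M ^+ j *m M = block_mx (ulsubmx (M ^+ j)) (ursubmx (M ^+ j))
      (dlsubmx (M ^+ j)) (drsubmx (M ^+ j)) *m
      block_mx (ulsubmx M) (ursubmx M) (dlsubmx M) (drsubmx M) by rewrite !submxK.
  rewrite mulmx_block block_mxKul block_mxKdl IH1 IH2 Hdl !mulmx0 mul0mx !addr0.
  by rewrite exprSr mulmxE.
exists N; rewrite -(proj1 (Hp N)) HN.
by apply/matrixP => i j; rewrite !mxE.
Qed.
End Block.
Lemma lsub_row0 (a b c : nat) (u : 'rV[C]_a) (M : 'M[C]_(a + b, a + c)) :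
  lsubmx (row_mx u (0 : 'rV_b) *m M) = u *m ulsubmx M.
Proof.
by rewrite -{1}(vsubmxK M) mul_row_col mul0mx addr0 -mulmx_lsub.
Qed.

Lemma outerE (a c : nat) (u u' : 'rV[C]_a) (w w' : 'rV[C]_c) :
  \matrix_(i < a, j < c) (u 0 i * w 0 j - u' 0 i * w' 0 j) = u^T *m w - u'^T *m w'.
Proof.
by apply/matrixP => i j; rewrite !mxE !big_ord1 !mxE.
Qed.

Lemma lsub0 (a b c : nat) : lsubmx (0 : 'M[C]_(a, b + c)) = 0.
Proof. by apply/matrixP => i j; rewrite !mxE. Qed.

Lemma pow_ge0 (n : nat) (X : 'M[C]_n) N m : X ^+ N = 0 -> (N <= m)%N -> X ^+ m = 0.
Proof. by move=> HN H; rewrite -(subnKC H) exprD HN mul0r. Qed.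

Section Main.
Variables g1 g2 : nlie.
Variable D : 'M[C]_(pdim g1 g2).
Hypothesis HD : is_prod_derivation D.
Local Notation n1 := (ngen g1).
Local Notation n2 := (ngen g2).

Definition M1 : 'M[C]_(ldim g1) := lsubmx (lsubmx (usubmx (usubmx D))).
Definition M2 : 'M[C]_(ldim g2) := rsubmx (lsubmx (dsubmx (usubmx D))).
Definition M3 : 'M[C]_(n1 * n2) := rsubmx (dsubmx D).

Lemma D11E v : D11 D v = v *m M1.
Proof.
rewrite /D11 /p1 /i1 -{1}(vsubmxK D) mul_row_col mul0mx addr0.
by rewrite -{1}(vsubmxK (usubmx D)) mul_row_col mul0mx addr0 -!mulmx_lsub.
Qed.
Lemma D22E v : D22 D v = v *m M2.
Proof.
rewrite /D22 /p2 /i2 -{1}(vsubmxK D) mul_row_col mul0mx addr0.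
by rewrite -{1}(vsubmxK (usubmx D)) mul_row_col mul0mx add0r -mulmx_lsub -mulmx_rsub.
Qed.
Lemma D33E v : D33 D v = v *m M3.
Proof.
by rewrite /D33 /p3 /i3 -{1}(vsubmxK D) mul_row_col mul0mx add0r -mulmx_rsub.
Qed.

Lemma p1_br (x y : 'rV[C]_(pdim g1 g2)) : p1 (prod_br x y) = lbr (p1 x) (p1 y).
Proof. by rewrite /p1 /prod_br !row_mxKl. Qed.
Lemma p2_br (x y : 'rV[C]_(pdim g1 g2)) : p2 (prod_br x y) = lbr (p2 x) (p2 y).
Proof. by rewrite /p2 /prod_br row_mxKl row_mxKr. Qed.
Lemma p3_br (x y : 'rV[C]_(pdim g1 g2)) : p3 (prod_br x y) =
  mxvec ((lsubmx (p1 x))^T *m lsubmx (p2 y) - (lsubmx (p1 y))^T *m lsubmx (p2 x)).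
Proof. by rewrite /p3 /prod_br row_mxKr outerE. Qed.

Lemma p1D (x y : 'rV[C]_(pdim g1 g2)) : p1 (x + y) = p1 x + p1 y.
Proof. by rewrite /p1 !linearD. Qed.
Lemma p2D (x y : 'rV[C]_(pdim g1 g2)) : p2 (x + y) = p2 x + p2 y.
Proof. by rewrite /p2 !linearD. Qed.
Lemma p3D (x y : 'rV[C]_(pdim g1 g2)) : p3 (x + y) = p3 x + p3 y.
Proof. by rewrite /p3 !linearD. Qed.

Lemma p1i1 v : p1 (@i1 g1 g2 v) = v. Proof. by rewrite /p1 /i1 !row_mxKl. Qed.
Lemma p2i1 v : p2 (@i1 g1 g2 v) = 0. Proof. by rewrite /p2 /i1 row_mxKl row_mxKr. Qed.
Lemma p1i2 v : p1 (@i2 g1 g2 v) = 0. Proof. by rewrite /p1 /i2 !row_mxKl. Qed.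
Lemma p2i2 v : p2 (@i2 g1 g2 v) = v. Proof. by rewrite /p2 /i2 row_mxKl row_mxKr. Qed.

Lemma M1_der u w : lbr u w *m M1 = lbr (u *m M1) w + lbr u (w *m M1).
Proof.
rewrite -!D11E.
have E : @i1 g1 g2 (lbr u w) = prod_br (@i1 g1 g2 u) (@i1 g1 g2 w).
  rewrite /prod_br !p1i1 !p2i1 br0l ?row_mx0; last exact: lbr_lie.
  by rewrite /i1 outerE !lsub0 !mulmx0 subrr linear0.
by rewrite /D11 E HD p1D !p1_br !p1i1.
Qed.

Lemma M2_der u w : lbr u w *m M2 = lbr (u *m M2) w + lbr u (w *m M2).
Proof.
rewrite -!D22E.
have E : @i2 g1 g2 (lbr u w) = prod_br (@i2 g1 g2 u) (@i2 g1 g2 w).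
  rewrite /prod_br !p1i2 !p2i2 br0l ?row_mx0; last exact: lbr_lie.
  by rewrite /i2 outerE !lsub0 !trmx0 !mul0mx subrr linear0.
by rewrite /D22 E HD p2D !p2_br !p2i2.
Qed.

Lemma iter_mx (n : nat) (f : 'rV[C]_n -> 'rV[C]_n) (M : 'M[C]_n) :
  (forall v, f v = v *m M) -> forall r v, iter r f v = v *m M ^+ r.
Proof.
move=> Hf; elim=> [|r IH] v; first by rewrite expr0 mulmx1.
by rewrite iterS IH Hf exprSr -mulmxE mulmxA.
Qed.

Lemma nil_mx (n : nat) (f : 'rV[C]_n -> 'rV[C]_n) (M : 'M[C]_n) :
  (forall v, f v = v *m M) -> nilpotent_endo f -> exists N, M ^+ N = 0.
Proof.
move=> Hf [N HN]; exists N; apply: mx_ext_rows => u.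
by rewrite mulmx0 -(iter_mx Hf) HN.
Qed.

Definition MA : 'M[C]_n1 := ulsubmx M1.
Definition MB : 'M[C]_n2 := ulsubmx M2.

Lemma key (i : 'I_n1) (j : 'I_n2) :
  mxvec (delta_mx i j) *m M3 = mxvec (MA^T *m delta_mx i j + delta_mx i j *m MB).
Proof.
pose x := @i1 g1 g2 (row_mx 'e_i 0).
pose y := @i2 g1 g2 (row_mx 'e_j 0).
have E : @i3 g1 g2 (mxvec (delta_mx i j)) = prod_br x y.
  rewrite /prod_br /x /y p1i1 p2i1 p1i2 p2i2 br0r ?br0l; try exact: lbr_lie.
  rewrite row_mx0 /i3 outerE lsub0 !row_mxKl trmx0 mul0mx subr0.
  by rewrite trmx_delta mul_delta_mx.
rewrite -D33E /D33 E HD p3D !p3_br.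
rewrite /x /y !p1i1 !p2i1 !p1i2 !p2i2 !lsub0 !row_mxKl !trmx0 !mul0mx !mulmx0 !subr0.
rewrite -/(D11 D _) -/(D22 D _) D11E D22E !lsub_row0 -linearD /=.
by rewrite trmx_mul -mulmxA !trmx_delta !mul_delta_mx mulmxA mul_delta_mx.
Qed.

Definition LA : 'M[C]_(n1 * n2) := @lin_mx C n1 n2 n1 n2 (mulmx MA^T).
Definition LB : 'M[C]_(n1 * n2) := @lin_mx C n1 n2 n1 n2 (mulmxr MB).

Lemma M3E : M3 = LA + LB.
Proof.
apply/row_matrixP => t; rewrite !rowE.
case/mxvec_indexP: t => i j.
by rewrite -mxvec_delta key mulmxDr !mul_vec_lin /= linearD.
Qed.

Lemma LAX r X : mxvec X *m LA ^+ r = mxvec ((MA^T) ^+ r *m X).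
Proof.
elim: r X => [|r IH] X; first by rewrite !expr0 mulmx1 mul1mx.
by rewrite exprSr -mulmxE mulmxA IH mul_vec_lin /= mulmxA mulmxE -exprS.
Qed.
Lemma LBX r X : mxvec X *m LB ^+ r = mxvec (X *m MB ^+ r).
Proof.
elim: r X => [|r IH] X; first by rewrite !expr0 !mulmx1.
by rewrite exprSr -mulmxE mulmxA IH mul_vec_lin /= -mulmxA mulmxE -exprSr.
Qed.

Lemma LAB : LA * LB = LB * LA.
Proof.
apply: mx_ext_rows => u; rewrite -(vec_mxK u) -!mulmxE !mulmxA !mul_vec_lin /=.
by rewrite mulmxA.
Qed.


Lemma M3_nil : nilpotent_endo (D11 D) -> nilpotent_endo (D22 D) ->
  exists N, M3 ^+ N = 0.
Proof.
move=> /(nil_mx D11E) H1 /(nil_mx D22E) H2.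
have [NA HA] := block_nil M1_der H1.
have [NB HB] := block_nil M2_der H2.
have LAN : LA ^+ NA = 0.
  apply: mx_ext_rows => u; rewrite -(vec_mxK u) LAX -trmxX.
  by rewrite -/MA HA trmx0 mul0mx linear0 mulmx0.
have LBN : LB ^+ NB = 0.
  apply: mx_ext_rows => u; rewrite -(vec_mxK u) LBX.
  by rewrite -/MB HB mulmx0 linear0 mulmx0.
exists (NA + NB)%N; rewrite M3E (exprDn_comm _ LAB).
apply: big1 => i _.
case: (leqP NB i) => Hi.
  by rewrite (pow_ge0 LBN Hi) mulr0 mul0rn.
rewrite (@pow_ge0 _ LA NA) ?mul0r ?mul0rn //.
by rewrite -addnBA ?leq_addr // ltnW.
Qed.
End Main.

Unset Implicit Arguments.
Set Strict Implicit.
Theorem mainTheorem10 (g1 g2 : nlie) (D : 'M[C]_(pdim g1 g2)) :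
  S_algebra g1 -> S_algebra g2 ->
  is_prod_derivation D ->
  nilpotent_endo (D11 D) -> nilpotent_endo (D22 D) ->
  nilpotent_endo (D33 D).
Proof.
move=> _ _ HD H1 H2.
have [N HN] := M3_nil HD H1 H2.
exists N => v; by rewrite (iter_mx (D33E D)) HN mulmx0.
Qed.
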